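(* Let $(S,H)$ be a polarized K3 surface with $H^2=2d$, $d>0$ an integer, and let $\tau_d$ be the Hodge isometry of $\widetilde H(S,\mathbb Z)=H^0\oplus H^2\oplus H^4$ induced by the autoequivalence $\mathsf O_d=\mathsf T_{\mathcal O_S}\circ(-\otimes\mathcal O_S(H))$ of $D^b(S)$, i.e. $\tau_d(r,\Delta,s)=(-dr-H\cdot\Delta-s,\ rH+\Delta,\ -r)$. Then for a nonzero integer $n$, one has $\tau_d^{2n}=\mathrm{id}$ if and only if $(d,n)$ is one of $(1,3k)$, $(2,2k)$, $(3,3k)$ for some nonzero integer $k$.
   Context: $\mathsf T_{\mathcal O_S}$ denotes the spherical twist $F\mapsto\mathrm{Cone}(\mathrm{RHom}(\mathcal O_S,F)\otimes\mathcal O_S\to F)$. Elements of $\widetilde H(S,\mathbb Z)$ are written $(r,\Delta,s)$ with $r\in H^0$, $\Delta\in H^2(S,\mathbb Z)$, $s\in H^4$. *)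

(* Defs.v *)
From mathcomp Require Import all_boot all_order all_algebra.
Set Implicit Arguments. Unset Strict Implicit. Unset Printing Implicit Defensive.
Import Order.TTheory GRing.Theory Num.Theory.
Local Open Scope ring_scope.

(* E8 Dynkin diagram T_{2,3,5}: chain 0-1-2-3-4-5-6, node 7 attached to node 2. *)
Definition e8adj (a b : nat) : bool :=
  [|| (a.+1 == b) && (b <= 6)%N, (b.+1 == a) && (a <= 6)%N,
      (a == 2%N) && (b == 7%N) | (a == 7%N) && (b == 2%N)].

Definition e8m (a b : nat) : int :=
  if a == b then -2 else if e8adj a b then 1 else 0.

(* Gram matrix of the K3 lattice U^3 (+) E8(-1)^2, indices 0..21:
   0..5 three hyperbolic planes U, 6..13 and 14..21 two copies of E8(-1). *)
Definition k3g (i j : nat) : int :=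
  if (i < 6)%N && (j < 6)%N then
    (if (i./2 == j./2) && (i != j) then 1 else 0)
  else if [&& (6 <= i < 14)%N & (6 <= j < 14)%N] then e8m (i - 6) (j - 6)
  else if (14 <= i)%N && (14 <= j)%N then e8m (i - 14) (j - 14)
  else 0.

(* H^2(S,Z) of a K3 surface, with its intersection form. *)
Definition K3L := 'rV[int]_22.
Definition k3gram : 'M[int]_22 := \matrix_(i < 22, j < 22) k3g i j.
Definition k3form (x y : K3L) : int := (x *m k3gram *m y^T) 0 0.

(* Mukai lattice H^0 (+) H^2 (+) H^4 : elements (r, Delta, s). *)
Definition mukai := (int * K3L * int)%type.

Definition tau (d : nat) (H : K3L) (v : mukai) : mukai :=
  let: (r, D, s) := v in
  (- (d%:Z * r) - k3form H D - s, r *: H + D, - r).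

Definition tau_inv (d : nat) (H : K3L) (v : mukai) : mukai :=
  let: (r, D, s) := v in
  (- s, D + s *: H, - r - k3form H D - d%:Z * s).

Definition tau_pow (d : nat) (H : K3L) (m : int) : mukai -> mukai :=
  match m with
  | Posz k => iter k (tau d H)
  | Negz k => iter k.+1 (tau_inv d H)
  end.

(* Main.v *)
Require Import Defs.
From mathcomp Require Import all_boot all_order all_algebra.
From mathcomp Require Import ring lra zify.
Import Order.TTheory GRing.Theory Num.Theory.
Local Open Scope ring_scope.

Lemma k3formDZ (H u w : K3L) (a : int) :
  k3form H (a *: u + w) = a * k3form H u + k3form H w.
Proof. by rewrite /k3form linearD linearZ /= mulmxDr -scalemxAr !mxE. Qed.

Definition stepT (d x : int) (t : int * int * int) : int * int * int :=
  (- (d * t.1.1) - (t.1.2 * (2 * d) + x) - t.2, t.1.1 + t.1.2, - t.1.1).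

Lemma lift1 d H D r c s : k3form H H = 2 * d%:Z ->
  tau d H (r, c *: H + D, s) =
  let t := stepT d%:Z (k3form H D) (r, c, s) in (t.1.1, t.1.2 *: H + D, t.2).
Proof.
move=> hH; rewrite /tau /= k3formDZ hH scalerDl addrA; congr (_, _, _); try ring.
Qed.

Lemma liftk d H D k r c s : k3form H H = 2 * d%:Z ->
  iter k (tau d H) (r, c *: H + D, s) =
  let t := iter k (stepT d%:Z (k3form H D)) (r, c, s) in (t.1.1, t.1.2 *: H + D, t.2).
Proof.
move=> hH; elim: k => [|k IH] //=; rewrite IH /=.
case: (iter k _ _) => [[r' c'] s'] /=; exact: lift1.
Qed.

Lemma tau_invK d H v : k3form H H = 2 * d%:Z -> tau d H (tau_inv d H v) = v.
Proof.
move=> hH; case: v => [[r D] s] /=.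
rewrite [D + _]addrC k3formDZ hH addrA scaleNr addNr add0r opprK.
congr (_,_,_); ring.
Qed.

Lemma tauK d H v : k3form H H = 2 * d%:Z -> tau_inv d H (tau d H v) = v.
Proof.
move=> hH; case: v => [[r D] s] /=.
rewrite k3formDZ hH scaleNr addrAC subrr add0r.
congr (_,_,_); ring.
Qed.

Lemma per1 x r s : iter 6 (stepT 1 x) (r, 0, s) = (r, 0, s).
Proof. rewrite /= /stepT /=; congr (_,_,_); ring. Qed.
Lemma per2 x r s : iter 4 (stepT 2 x) (r, 0, s) = (r, 0, s).
Proof. rewrite /= /stepT /=; congr (_,_,_); ring. Qed.
Lemma per3 x r s : iter 6 (stepT 3 x) (r, 0, s) = (r, 0, s).
Proof. rewrite /= /stepT /=; congr (_,_,_); ring. Qed.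
Lemma perA1 t : iter 6 (stepT 1 0) t = t.
Proof. case: t => [[r c] s]; rewrite /= /stepT /=; congr (_,_,_); ring. Qed.
Lemma perA2 t : iter 4 (stepT 2 0) t = t.
Proof. case: t => [[r c] s]; rewrite /= /stepT /=; congr (_,_,_); ring. Qed.
Lemma perA3 t : iter 6 (stepT 3 0) t = t.
Proof. case: t => [[r c] s]; rewrite /= /stepT /=; congr (_,_,_); ring. Qed.

Definition rr (d : int) k := (iter k (stepT d 0) (0,0,-1)).1.1.
Definition yy d k := rr d k.+1 + rr d k.
Definition uu d k := (-1) ^+ k * yy d k.

Lemma yy_rec d k : yy d k.+2 + (d - 2) * yy d k.+1 + yy d k = 0.
Proof.
rewrite /yy /rr !iterS; case: (iter k _ _) => [[a b] c].
rewrite /stepT /=; ring.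
Qed.

Lemma uu_rec d k : uu d k.+2 = (d - 2) * uu d k.+1 - uu d k.
Proof.
have := yy_rec d k; rewrite /uu !exprS.
move: (yy d k.+2) (yy d k.+1) (yy d k) => a b c h.
have -> : a = - ((d - 2) * b + c).
by rewrite -[LHS]subr0 -h; ring.
ring.
Qed.

Lemma grow d : 4 <= d -> forall k : nat, k%:Z + 1 <= uu d k /\ uu d k + 1 <= uu d k.+1.
Proof.
move=> hd; elim=> [|k [IH1 IH2]].
  rewrite /uu /yy /rr /= /stepT /=; split; lia.
split; first lia.
rewrite uu_rec.
have : 0 <= (d - 4) * uu d k.+1 by apply: mulr_ge0; lia.
lia.
Qed.

Lemma k3form0 H : k3form H 0 = 0.
Proof. by rewrite /k3form trmx0 mulmx0 mxE. Qed.

Lemma iter_per T (f : T -> T) p : (forall t, iter p f t = t) ->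
  forall q t, iter (q * p) f t = t.
Proof. by move=> hp; elim=> [|q IH] t //; rewrite mulSn iterD IH hp. Qed.

Lemma per_div T (f : T -> T) p m e : (forall t, iter p f t = t) ->
  iter m f e = e -> iter (m %% p) f e = e.
Proof.
move=> hp; rewrite {1}(divn_eq m p) iterD => h.
by rewrite -{2}h iter_per.
Qed.

Lemma iter_invK d H j v : k3form H H = 2 * d%:Z ->
  iter j (tau d H) (iter j (tau_inv d H) v) = v.
Proof.
move=> hH; elim: j v => [|j IH] v //.
by rewrite iterSr iterS tau_invK.
Qed.

Lemma iter_tauK d H j v : k3form H H = 2 * d%:Z ->
  iter j (tau_inv d H) (iter j (tau d H) v) = v.
Proof.
move=> hH; elim: j v => [|j IH] v //.
by rewrite iterSr iterS tauK.
Qed.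

Lemma pow_iff d H m : k3form H H = 2 * d%:Z ->
  (forall v, tau_pow d H m v = v) <-> (forall v, iter `|m|%N (tau d H) v = v).
Proof.
move=> hH; case: m => k /=; first by [].
split=> h v.
- have h' : forall v, iter k.+1 (tau_inv d H) v = v := h.
  by rewrite -[RHS](iter_invK d H k.+1 v hH) h'.
- have h' : forall v, iter k.+1 (tau_inv d H) v = v.
    have h'' : forall v, iter k.+1 (tau d H) v = v := h.
    by move=> w; rewrite -[RHS](iter_tauK d H k.+1 w hH) h''.
  exact: h'.
Qed.

Lemma toQ d H m : (0 < d)%N -> k3form H H = 2 * d%:Z ->
  (forall v, iter m (tau d H) v = v) ->
  forall s, iter m (stepT d%:Z 0) (0, 0, s) = (0, 0, s).
Proof.
move=> hd hH hP s.
have := hP (0, 0 *: H + 0, s); rewrite liftk // k3form0.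
case: (iter m _ _) => [[a b] c] /= [-> hb ->].
have := congr1 (k3form H) hb; rewrite !k3formDZ hH k3form0 !addr0 mul0r.
move/eqP; rewrite mulf_eq0 => /orP [/eqP -> //|]; lia.
Qed.

Lemma nonper_big (d : nat) m : (4 <= d)%N -> (0 < m)%N -> ~~ odd m ->
  iter m (stepT d%:Z 0) (0, 0, -1) = (0, 0, -1) -> False.
Proof.
move=> hd hm hodd he.
have [h1 _] := @grow d%:Z ltac:(lia) m.
have e1 : uu d%:Z m = uu d%:Z 0.
  rewrite /uu -signr_odd (negbTE hodd) /= /yy /rr iterS he //.
move: h1; rewrite e1 /uu /yy /rr /= /stepT /=; lia.
Qed.

Lemma nat_main d H N : (0 < d)%N -> k3form H H = 2 * d%:Z -> (0 < N)%N ->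
  (forall v, iter (2 * N) (tau d H) v = v) <->
  [\/ d = 1%N /\ (3 %| N)%N, d = 2%N /\ (2 %| N)%N | d = 3%N /\ (3 %| N)%N].
Proof.
move=> hd hH hN; split.
- move=> hP; have hQ := toQ _ _ _ hd hH hP.
  have hodd : ~~ odd (2 * N) by rewrite oddM.
  move: hd hH hP hQ; case: d => [|[|[|[|d]]]] // hd hH hP hQ.
  + apply: Or31; split => //.
    have := per_div _ _ _ _ _ perA1 (hQ 1).
    move=> hj; suff : (6 %| 2 * N)%N by lia.
    move: hj; rewrite /dvdn; case: (2 * N %% 6)%N (ltn_pmod (2 * N) (isT : (0 < 6)%N))
      => [|[|[|[|[|[|j]]]]]] //= _; by move/eqP; vm_compute.
  + apply: Or32; split => //.
    have := per_div _ _ _ _ _ perA2 (hQ 1).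
    move=> hj; suff : (4 %| 2 * N)%N by lia.
    move: hj; rewrite /dvdn; case: (2 * N %% 4)%N (ltn_pmod (2 * N) (isT : (0 < 4)%N))
      => [|[|[|[|j]]]] //= _; by move/eqP; vm_compute.
  + apply: Or33; split => //.
    have := per_div _ _ _ _ _ perA3 (hQ 1).
    move=> hj; suff : (6 %| 2 * N)%N by lia.
    move: hj; rewrite /dvdn; case: (2 * N %% 6)%N (ltn_pmod (2 * N) (isT : (0 < 6)%N))
      => [|[|[|[|[|[|j]]]]]] //= _; by move/eqP; vm_compute.
  + exfalso; apply: (nonper_big d.+4 (2 * N) _ _ hodd (hQ _)); lia.
- case=> [[dE /dvdnP [q ->]]|[dE /dvdnP [q ->]]|[dE /dvdnP [q ->]]]; subst d.
  + move=> [[r D] s].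
    have -> : (2 * (q * 3) = q * 6)%N by lia.
    apply: (iter_per _ _ _) => -[[r' D'] s'].
    rewrite -[D']add0r -(scale0r H) liftk // per1 /=; by rewrite scale0r.
  + move=> [[r D] s].
    have -> : (2 * (q * 2) = q * 4)%N by lia.
    apply: (iter_per _ _ _) => -[[r' D'] s'].
    rewrite -[D']add0r -(scale0r H) liftk // per2 /=; by rewrite scale0r.
  + move=> [[r D] s].
    have -> : (2 * (q * 3) = q * 6)%N by lia.
    apply: (iter_per _ _ _) => -[[r' D'] s'].
    rewrite -[D']add0r -(scale0r H) liftk // per3 /=; by rewrite scale0r.
Qed.

Lemma int_div (c : nat) (n : int) : (0 < c)%N -> n != 0 ->
  (c %| `|n|)%N <-> exists k : int, k != 0 /\ n = c%:Z * k.
Proof.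
move=> hc hn; split.
- move=> h; have : (c%:Z %| n)%Z by rewrite dvdzE.
  case/dvdzP=> q hq; exists q; split; last by rewrite mulrC.
  by apply: contraNneq hn => q0; rewrite hq q0 mul0r.
- by case=> k [_ ->]; rewrite abszM dvdn_mulr.
Qed.

Theorem theoremA9 (d : nat) (H : K3L) (n : int) :
  (0 < d)%N -> k3form H H = 2 * d%:Z -> n != 0 ->
  ((forall v : mukai, tau_pow d H (2 * n) v = v) <->
   exists k : int, k != 0 /\
     [\/ (d = 1%N /\ n = 3 * k), (d = 2%N /\ n = 2 * k) | (d = 3%N /\ n = 3 * k)]).
Proof.
move=> hd hH hn.
rewrite pow_iff // abszM /=.
have hN : (0 < `|n|)%N by rewrite absz_gt0.
rewrite nat_main //.
have h3 := int_div 3 n (isT : (0 < 3)%N) hn.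
have h2 := int_div 2 n (isT : (0 < 2)%N) hn.
split.
- case=> [[-> /h3 [k [k0 ->]]]|[-> /h2 [k [k0 ->]]]|[-> /h3 [k [k0 ->]]]];
    exists k; split => //; [exact: Or31 | exact: Or32 | exact: Or33].
- case=> k [k0 [[-> nE]|[-> nE]|[-> nE]]].
  + apply: Or31; split => //; apply/h3; by exists k.
  + apply: Or32; split => //; apply/h2; by exists k.
  + apply: Or33; split => //; apply/h3; by exists k.
Qed.
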